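(* Let $V$ be a complex vector space of dimension $k\ge2$, with basis $e_1,\dots,e_k$ and dual basis $\alpha_1,\dots,\alpha_k$. Let $$T_k=\sum_{1\le i<j\le k}\big(\alpha_i\otimes\alpha_j-\alpha_j\otimes\alpha_i\big)\otimes(e_i\wedge e_j)\in V^*\otimes V^*\otimes\Lambda^2V.$$ Then $$\underline{R}(T_k)\ge\left\lceil\frac{k^2}{2}\right\rceil=\binom{k}{2}+\left\lceil\frac{k}{2}\right\rceil.$$
   Context: The border rank $\underline{R}(T)$ is the smallest $r$ such that $T$ is a limit of sums of $r$ rank-one tensors $a\otimes b\otimes c$. *)

(* Defs.v *)
(* complex numbers are R[i] = complex R for R : realType
   (any realType is a model of the reals, so R[i] is a model of C). *)
From HB Require Import structures.
From mathcomp Require Import all_boot all_order all_algebra.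
From mathcomp Require Import reals.
From mathcomp Require Export complex.
Set Implicit Arguments. Unset Strict Implicit. Unset Printing Implicit Defensive.
Import Order.TTheory GRing.Theory Num.Theory.
Local Open Scope ring_scope.

(* Index type of the basis e_i /\ e_j (i < j) of Lambda^2 V, dim V = k. *)
Definition wedge2_idx (k : nat) := {p : 'I_k * 'I_k | (p.1 < p.2)%N}.

Definition tensor3 (F : Type) (A B C : finType) := A -> B -> C -> F.

Definition sum_rank_one (F : comPzRingType) (A B C : finType) (r : nat)
  (a : 'I_r -> A -> F) (b : 'I_r -> B -> F) (c : 'I_r -> C -> F)
  : tensor3 F A B C :=
  fun x y z => \sum_(l < r) a l x * b l y * c l z.

Definition is_sum_rank_one (F : comPzRingType) (A B C : finType) (r : nat)
  (S : tensor3 F A B C) : Prop :=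
  exists a b c, forall x y z, S x y z = @sum_rank_one F A B C r a b c x y z.

(* Border rank <= r over C = R[i] (Euclidean topology): T is the limit of a
   sequence of sums of r rank-one tensors (coordinatewise convergence, which
   is convergence in the finite-dimensional tensor space). *)
Definition border_rank_le (R : realType) (A B C : finType)
  (T : tensor3 R[i] A B C) (r : nat) : Prop :=
  exists S : nat -> tensor3 R[i] A B C,
    (forall n, is_sum_rank_one r (S n)) /\
    (forall eps : R[i], 0 < eps -> exists N : nat, forall n, (N <= n)%N ->
       forall x y z, `|T x y z - S n x y z| < eps).

(* T_k = sum_{i<j} (alpha_i (x) alpha_j - alpha_j (x) alpha_i) (x) (e_i /\ e_j)
   in coordinates w.r.t. alpha (x) alpha (x) (e_p /\ e_q)_{p<q}. *)
Definition Tk (R : realType) (k : nat) : tensor3 R[i] 'I_k 'I_k (wedge2_idx k) :=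
  fun i j s =>
    ((i == (val s).1) && (j == (val s).2))%:R
    - ((i == (val s).2) && (j == (val s).1))%:R.

(* Main.v *)
Require Import Defs.
From HB Require Import structures.
From mathcomp Require Import all_boot all_order all_algebra.
From mathcomp Require Import reals complex.
From mathcomp Require Import zify ring lra.
Set Implicit Arguments. Unset Strict Implicit. Unset Printing Implicit Defensive.
Import Order.TTheory GRing.Theory Num.Theory.
Local Open Scope ring_scope.

Definition dl (R : realType) (k : nat) (a b : 'I_k) : R[i] := (a == b)%:R.

Definition wc (R : realType) (k : nat) (s : wedge2_idx k) (u v : 'I_k) : R[i] :=
  dl R u (val s).1 * dl R v (val s).2 - dl R u (val s).2 * dl R v (val s).1.

Lemma Tk_wc (R : realType) (k : nat) t m s : @Tk R k t m s = wc R s t m.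
Proof. by rewrite /Tk /wc /dl -!mulnb !natrM. Qed.

Lemma sum_dl (R : realType) (k : nat) (a : 'I_k) (F : 'I_k -> R[i]) :
  \sum_t dl R t a * F t = F a.
Proof.
rewrite (bigD1 a) //= big1 ?addr0 /dl ?eqxx ?mul1r // => t /negPf ->.
by rewrite mul0r.
Qed.

Lemma sum_dr (R : realType) (k : nat) (a : 'I_k) (F : 'I_k -> R[i]) :
  \sum_t dl R a t * F t = F a.
Proof.
rewrite -(@sum_dl R k a); apply: eq_bigr => t _; by rewrite /dl eq_sym.
Qed.

Lemma wcN (R : realType) (k : nat) s (u v : 'I_k) : wc R s u v = - wc R s v u.
Proof. by rewrite /wc opprB mulrC [X in _ - X]mulrC. Qed.

Lemma wc_self (R : realType) (k : nat) (s P : wedge2_idx k) :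
  wc R s (val P).1 (val P).2 = (s == P)%:R.
Proof.
case: s P => [[s1 s2] hs] [[p1 p2] hp] /=; rewrite /wc /dl /=.
rewrite -natrM mulnb -[X in _ - X]natrM mulnb.
have -> : (p1 == s2) && (p2 == s1) = false.
  apply/andP => -[/eqP e1 /eqP e2]; subst; move: hs hp => /=; lia.
rewrite subr0.
case: (boolP ((p1 == s1) && (p2 == s2))) => H.
  move/andP: H => [/eqP e1 /eqP e2]; subst.
  by rewrite (bool_irrelevance hs hp) eqxx.
case: eqP => // -[e1 e2]; subst; by rewrite !eqxx in H.
Qed.

Lemma wc_pair (R : realType) (k : nat) (u v a b : 'I_k) :
  \sum_(s : wedge2_idx k) wc R s u v * wc R s a b
  = dl R u a * dl R v b - dl R u b * dl R v a.
Proof.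
case: (ltngtP u v) => huv.
- pose s0 : wedge2_idx k := exist _ (u, v) huv.
  rewrite (bigD1 s0) //= big1 ?addr0.
    have := wc_self R s0 s0; rewrite eqxx /= => ->; rewrite mul1r /wc /dl /=.
    by rewrite ![(a == _)]eq_sym ![(b == _)]eq_sym; ring.
  move=> s hs; have := wc_self R s s0; rewrite (negPf hs) /= => ->.
  by rewrite mul0r.
- pose s0 : wedge2_idx k := exist _ (v, u) huv.
  rewrite (bigD1 s0) //= big1 ?addr0.
    rewrite wcN; have := wc_self R s0 s0; rewrite eqxx /= => ->; rewrite /wc /dl /=.
    by rewrite ![(a == _)]eq_sym ![(b == _)]eq_sym; ring.
  move=> s hs; rewrite wcN; have := wc_self R s s0; rewrite (negPf hs) /= => ->.
  by rewrite oppr0 mul0r.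
- have e : u = v by apply: val_inj.
  subst v; rewrite big1; first by rewrite mulrC subrr.
  move=> s _.
  by rewrite /wc [dl R u (val s).2 * _]mulrC subrr mul0r.
Qed.

Notation Xt k := (wedge2_idx k * 'I_k)%type.

Definition Lf (R : realType) (k : nat) (T : tensor3 R[i] 'I_k 'I_k (wedge2_idx k))
  (x y : Xt k) : R[i] := \sum_t wc R x.1 t y.2 * T t x.2 y.1.

Definition Gf (R : realType) (k : nat) (y x : Xt k) : R[i] :=
  2^-1 * (dl R y.2 x.2 * wc R y.1 (val x.1).1 (val x.1).2
          - dl R y.2 (val x.1).1 * wc R y.1 (val x.1).2 x.2
          - dl R y.2 (val x.1).2 * wc R y.1 x.2 (val x.1).1).

Definition Dd (R : realType) (k : nat) (t m a b : 'I_k) : R[i] :=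
  dl R t a * dl R m b - dl R t b * dl R m a.

Lemma innerS (R : realType) (k : nat) (t m i : 'I_k) (P' : wedge2_idx k) m' :
  \sum_s wc R s t m * Gf R (s, i) (P', m')
  = 2^-1 * (dl R i m' * Dd R t m (val P').1 (val P').2
            - dl R i (val P').1 * Dd R t m (val P').2 m'
            - dl R i (val P').2 * Dd R t m m' (val P').1).
Proof.
rewrite /Dd -!wc_pair !mulr_sumr -!sumrB mulr_sumr; apply: eq_bigr => s _.
rewrite /Gf /=; ring.
Qed.

Lemma sum3 (R : realType) (k : nat) (F : 'I_k -> R[i]) (a b c : 'I_k) A B C K :
  \sum_i F i * (K * (dl R i a * A - dl R i b * B - dl R i c * C))
  = K * (F a * A - F b * B - F c * C).
Proof.
rewrite -(@sum_dl R k a F) -(@sum_dl R k b F) -(@sum_dl R k c F).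
rewrite !mulr_suml -!sumrB mulr_sumr; apply: eq_bigr => i _; ring.
Qed.

Lemma sum6 (R : realType) (k : nat) (F G H : 'I_k -> R[i]) (a1 b1 a2 b2 a3 b3 : 'I_k)
  X1 Y1 X2 Y2 X3 Y3 K :
  \sum_t K * (F t * (dl R t a1 * X1 - dl R t b1 * Y1)
              - G t * (dl R t a2 * X2 - dl R t b2 * Y2)
              - H t * (dl R t a3 * X3 - dl R t b3 * Y3))
  = K * (F a1 * X1 - F b1 * Y1 - (G a2 * X2 - G b2 * Y2) - (H a3 * X3 - H b3 * Y3)).
Proof.
rewrite -(@sum_dl R k a1 F) -(@sum_dl R k b1 F) -(@sum_dl R k a2 G).
rewrite -(@sum_dl R k b2 G) -(@sum_dl R k a3 H) -(@sum_dl R k b3 H).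
rewrite !mulr_suml -!sumrB mulr_sumr; apply: eq_bigr => i _; ring.
Qed.

Lemma LG (R : realType) (k : nat) (x z : Xt k) :
  \sum_y Lf (@Tk R k) x y * Gf R y z = (x == z)%:R.
Proof.
case: x z => [P m] [P' m'].
set p' := (val P').1; set q' := (val P').2.
transitivity (\sum_t \sum_i wc R P t i * \sum_s wc R s t m * Gf R (s, i) (P', m')).
  rewrite (eq_bigr (fun y : Xt k => (fun s i => Lf (@Tk R k) (P, m) (s, i) * Gf R (s, i) (P', m')) y.1 y.2)); last by case.
  rewrite -(pair_bigA _ (fun s i => Lf (@Tk R k) (P, m) (s, i) * Gf R (s, i) (P', m'))) /=.
  rewrite exchange_big /= [RHS]exchange_big /=.
  apply: eq_bigr => i _; rewrite /Lf /=.
  under eq_bigr do rewrite mulr_suml.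
  rewrite exchange_big /=; apply: eq_bigr => t _.
  rewrite mulr_sumr; apply: eq_bigr => s _; rewrite Tk_wc mulrA //.
under eq_bigr => t _ do under eq_bigr => i _ do rewrite innerS.
under eq_bigr => t _ do rewrite (sum3 (fun i => wc R P t i)).
rewrite /Dd (sum6 (fun t => wc R P t m') (fun t => wc R P t p') (fun t => wc R P t q')).
rewrite (wcN R P m' p') (wcN R P m' q') (wcN R P q' p') wc_self xpair_eqE -mulnb natrM /dl.
by field.
Qed.

Lemma small_rowfree (R : realType) n (A : 'M[R[i]]_n) :
  (forall i, \sum_j `|A i j| < 1) -> row_free (1%:M - A).
Proof.
move=> hA; apply/negPn/negP => hnf.
set B := 1%:M - A.
case: (pickP (fun i => row i (kermx B) != 0)) => [i0 hi0 | hnone]; last first.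
  move: hnf; rewrite -kermx_eq0 => /negP; apply; apply/eqP/row_matrixP => i.
  by rewrite row0; apply/eqP; have := hnone i => /= /negbFE.
set u := row i0 (kermx B).
have hu : u = u *m A.
  have : u *m B = 0 by rewrite /u -row_mul mulmx_ker row0.
  by rewrite /B mulmxBr mulmx1 => /eqP; rewrite subr_eq0 => /eqP.
have key : \sum_j `|u 0 j| <= \sum_i `|u 0 i| * \sum_j `|A i j|.
  rewrite {1}hu.
  under eq_bigr do rewrite mxE.
  apply: (le_trans (ler_sum _ (fun j _ => ler_norm_sum _ _ _))) => /=.
  rewrite exchange_big /=; apply: ler_sum => i _; rewrite mulr_sumr.
  by apply: ler_sum => j _; rewrite normrM.
have h0 : \sum_i `|u 0 i| * (1 - \sum_j `|A i j|) = 0.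
  apply/eqP; rewrite eq_le; apply/andP; split.
    under eq_bigr do rewrite mulrBr mulr1.
    by rewrite sumrB subr_le0.
  by apply: sumr_ge0 => i _; rewrite mulr_ge0 // subr_ge0 ltW.
have hz : forall i, u 0 i = 0.
  move=> i.
  have H : (forall j, true -> 0 <= `|u 0 j| * (1 - \sum_j0 `|A j j0|)).
    by move=> j _; rewrite mulr_ge0 // subr_ge0 ltW.
  have := @psumr_eq0P _ _ _ _ H h0 i isT.
  move=> /eqP; rewrite mulf_eq0 subr_eq0.
  case/orP => [H1 | /eqP e]; first by apply/normr0_eq0/eqP.
  by move: (hA i); rewrite e ltxx.
move: hi0; rewrite -/u => /eqP; apply; apply/rowP => j.
by rewrite hz mxE.
Qed.

Definition mxX (R : realType) (k : nat) (f : Xt k -> Xt k -> R[i]) :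
  'M[R[i]]_#|{: Xt k}| := \matrix_(a, b) f (enum_val a) (enum_val b).

Lemma mxX_mul (R : realType) (k : nat) (f g : Xt k -> Xt k -> R[i]) :
  mxX f *m mxX g = mxX (fun x z => \sum_y f x y * g y z).
Proof.
apply/matrixP => a b; rewrite !mxE (big_enum_val (fun y => f (enum_val a) y * g y (enum_val b))).
by apply: eq_bigr => j _; rewrite !mxE.
Qed.

Lemma mxX_1 (R : realType) (k : nat) :
  mxX (fun x z : Xt k => ((x == z)%:R : R[i])) = 1%:M.
Proof. by apply/matrixP => a b; rewrite !mxE (inj_eq enum_val_inj). Qed.

Lemma GM (R : realType) (k : nat) : mxX (@Gf R k) *m mxX (Lf (@Tk R k)) = 1%:M.
Proof.
apply: mulmx1C; rewrite mxX_mul -(mxX_1 R k).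
by apply/matrixP => x z; rewrite !mxE LG.
Qed.

Lemma sum_wca (R : realType) (k : nat) (P : wedge2_idx k) (i : 'I_k) (a : 'I_k -> R[i]) :
  \sum_t wc R P t i * a t = a (val P).1 * dl R i (val P).2 - a (val P).2 * dl R i (val P).1.
Proof.
transitivity (\sum_t dl R t (val P).1 * (dl R i (val P).2 * a t)
              - \sum_t dl R t (val P).2 * (dl R i (val P).1 * a t)).
  by rewrite -sumrB; apply: eq_bigr => t _; rewrite /wc; ring.
by rewrite !sum_dl; ring.
Qed.

Lemma rank1 (R : realType) (k : nat) (a b : 'I_k -> R[i]) (c : wedge2_idx k -> R[i]) :
  (\rank (mxX (Lf (fun t m s => (a t * b m * c s)%R))) <= k.-1)%N.
Proof.
set A1 : 'M[R[i]]_(#|{: Xt k}|, k) :=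
  \matrix_(x, i) ((\sum_t wc R (enum_val x).1 t i * a t) * b (enum_val x).2).
set B1 : 'M[R[i]]_(k, #|{: Xt k}|) :=
  \matrix_(i, y) ((i == (enum_val y).2)%:R * c (enum_val y).1).
have -> : mxX (Lf (fun t m s => a t * b m * c s)) = A1 *m B1.
  apply/matrixP => x y; rewrite !mxE (bigD1 (enum_val y).2) //= big1.
    rewrite !mxE eqxx mul1r addr0 /Lf mulr_suml mulr_suml.
    by apply: eq_bigr => t _; ring.
  by move=> i /negPf hi; rewrite !mxE hi mul0r mulr0.
apply: leq_trans (mxrankM_maxl _ _) _.
case: (eqVneq (\row_i a i) 0) => ha.
  have -> : A1 = 0.
    apply/matrixP => x i; rewrite !mxE big1 ?mul0r // => t _.
    by move/rowP: ha => /(_ t); rewrite !mxE => ->; rewrite mulr0.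
  by rewrite mxrank0.
rewrite -mxrank_tr.
have hk : (\row_i a i <= kermx A1^T)%MS.
  apply/sub_kermxP; apply/rowP => x; rewrite !mxE.
  under eq_bigr do rewrite !mxE sum_wca.
  set p := (val (enum_val x).1).1; set q := (val (enum_val x).1).2.
  transitivity (\sum_i dl R i q * (a i * a p * b (enum_val x).2)
                - \sum_i dl R i p * (a i * a q * b (enum_val x).2)).
    by rewrite -sumrB; apply: eq_bigr => i _; ring.
  by rewrite !sum_dl; ring.
have := mxrankS hk; rewrite mxrank_ker rank_rV ha /=.
have := rank_leq_row A1^T.
lia.
Qed.

Lemma cardW (k : nat) : (2 * #|{: wedge2_idx k}| + k = k * k)%N.
Proof.
have e1 : #|{: wedge2_idx k}| = (\sum_(u < k) \sum_(v < k) (u < v : nat))%N.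
  rewrite card_sig -sum1_card big_mkcond /=.
  rewrite -(pair_bigA _ (fun u v : 'I_k => if (u < v)%N then 1%N else 0%N)) /=.
  by apply: eq_bigr => u _; apply: eq_bigr => v _; case: (u < v)%N.
have e2 : (\sum_(u < k) \sum_(v < k) (v < u : nat))%N = #|{: wedge2_idx k}|.
  by rewrite e1 exchange_big.
have e3 : (\sum_(u < k) \sum_(v < k) ((u < v : nat) + (v < u : nat) + (u == v : nat)))%N = (k * k)%N.
  rewrite -[X in (_ = X * _)%N]card_ord -sum_nat_const; apply: eq_bigr => u _.
  rewrite -[X in (_ = X)%N]card_ord -sum1_card; apply: eq_bigr => v _.
  case: (ltngtP u v) => h.
  - by rewrite -val_eqE /= (ltn_eqF h).
  - by rewrite -val_eqE /= (gtn_eqF h).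
  - by rewrite (val_inj h) eqxx.
have e4 : (\sum_(u < k) \sum_(v < k) (u == v : nat))%N = k.
  rewrite -[X in (_ = X)%N]card_ord -sum1_card; apply: eq_bigr => u _.
  by rewrite (bigD1 u) //= eqxx big1 // => v /negPf; rewrite eq_sym => ->.
rewrite -e3; under eq_bigr do rewrite !big_split /=.
by rewrite !big_split /= -e1 e2 e4; lia.
Qed.

Lemma norm_wc (R : realType) (k : nat) s (u v : 'I_k) : `|wc R s u v| <= 2.
Proof.
have hd : forall a b : 'I_k, `|dl R a b| <= 1.
  by move=> a b; rewrite /dl; case: (a == b); rewrite ?normr1 ?normr0.
rewrite /wc; apply: (le_trans (ler_normB _ _)).
rewrite -[2]/(1 + 1); apply: lerD; rewrite normrM -[1]mulr1;
  apply: ler_pM => //; exact: hd.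
Qed.

Lemma rank_upper (R : realType) (k r : nat) (a : 'I_r -> 'I_k -> R[i])
  (b : 'I_r -> 'I_k -> R[i]) (c : 'I_r -> wedge2_idx k -> R[i])
  (S : tensor3 R[i] 'I_k 'I_k (wedge2_idx k)) :
  (forall x y z, S x y z = sum_rank_one a b c x y z) ->
  (\rank (mxX (Lf S)) <= r * k.-1)%N.
Proof.
move=> hS.
have -> : mxX (Lf S) = \sum_(l < r) mxX (Lf (fun t m s => (a l t * b l m * c l s)%R)).
  apply/matrixP => x y; rewrite summxE !mxE /Lf.
  under eq_bigr do rewrite hS /sum_rank_one mulr_sumr.
  rewrite exchange_big /=; apply: eq_bigr => l _; rewrite mxE.
  by apply: eq_bigr => t _.
apply: leq_trans (_ : (\sum_(l < r) k.-1 <= _)%N); last first.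
  by rewrite sum_nat_const card_ord.
apply: (big_ind2 (fun (A : 'M[R[i]]_#|{: Xt k}|) n => (\rank A <= n)%N)).
- by rewrite mxrank0.
- move=> A1 n1 A2 n2 h1 h2; apply: leq_trans (mxrank_add _ _) _.
  exact: leq_add.
- move=> l _; exact: rank1.
Qed.

Lemma rank_lower (R : realType) (k : nat) (S : tensor3 R[i] 'I_k 'I_k (wedge2_idx k))
  (eps : R[i]) : 0 < eps ->
  (forall x y z, `|@Tk R k x y z - S x y z| < eps) ->
  #|{: Xt k}|%:R * ((\sum_(y : Xt k) \sum_(x : Xt k) `|@Gf R k y x|) * (k%:R * (2 * eps))) < 1 ->
  (#|{: Xt k}| <= \rank (mxX (Lf S)))%N.
Proof.
move=> heps hD hsmall.
set N := #|{: Xt k}|.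
set c := \sum_(y : Xt k) \sum_(x : Xt k) `|@Gf R k y x|.
set D := fun t m s => @Tk R k t m s - S t m s.
have hE : mxX (Lf S) = mxX (Lf (@Tk R k)) - mxX (Lf D).
  apply/matrixP => x y; rewrite !mxE /Lf -sumrB; apply: eq_bigr => t _.
  by rewrite /D; ring.
have hGM : mxX (@Gf R k) *m mxX (Lf S) = 1%:M - mxX (@Gf R k) *m mxX (Lf D).
  by rewrite hE mulmxBr GM.
have hE1 : forall l j, `|mxX (Lf D) l j| <= k%:R * (2 * eps).
  move=> l j; rewrite mxE /Lf; apply: le_trans (ler_norm_sum _ _ _) _.
  apply: le_trans (_ : \sum_(t < k) 2 * eps <= _).
    apply: ler_sum => t _; rewrite normrM; apply: ler_pM => //.
      exact: norm_wc.
    exact: ltW (hD _ _ _).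
  by rewrite sumr_const card_ord [X in _ <= X]mulr_natl.
have hG1 : forall i, \sum_l `|mxX (@Gf R k) i l| <= c.
  move=> i; under eq_bigr do rewrite mxE.
  rewrite -(big_enum_val (fun x => `|@Gf R k (enum_val i) x|)) /c.
  rewrite [X in _ <= X](bigD1 (enum_val i)) //= lerDl.
  by apply: sumr_ge0 => y _; apply: sumr_ge0 => x _.
have hrf : row_free (1%:M - mxX (@Gf R k) *m mxX (Lf D)).
  apply: small_rowfree => i; apply: le_lt_trans hsmall.
  apply: le_trans (_ : \sum_(j < N) c * (k%:R * (2 * eps)) <= _); last first.
    by rewrite sumr_const card_ord [X in _ <= X]mulr_natl.
  apply: ler_sum => j _; rewrite mxE.
  apply: le_trans (ler_norm_sum _ _ _) _.
  apply: le_trans (_ : \sum_l `|mxX (@Gf R k) i l| * (k%:R * (2 * eps)) <= _).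
    by apply: ler_sum => l _; rewrite normrM; apply: ler_wpM2l.
  rewrite -mulr_suml; apply: ler_wpM2r => //.
  by rewrite mulr_ge0 ?ler0n // mulr_ge0 ?ler0n // ltW.
have hr : \rank (mxX (@Gf R k) *m mxX (Lf S)) = N by rewrite hGM; apply/eqP.
by rewrite -{1}hr mxrankM_maxr.
Qed.

Theorem corollary1 (R : realType) (k : nat) (hk : (2 <= k)%N) :
  forall r : nat, border_rank_le (@Tk R k) r -> (uphalf (k ^ 2) <= r)%N.
Proof.
move=> r [S [HS Hc]].
set N := #|{: Xt k}|.
set c := \sum_(y : Xt k) \sum_(x : Xt k) `|@Gf R k y x|.
set K := N%:R * (c * (k%:R * 2)) : R[i].
have hc : 0 <= c by apply: sumr_ge0 => y _; apply: sumr_ge0.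
have hK : 0 <= K by rewrite mulr_ge0 ?ler0n // mulr_ge0 // mulr_ge0 ?ler0n.
have hK1 : 0 < K + 1 by apply: ltr_pwDr.
set eps := (K + 1)^-1.
have heps : 0 < eps by rewrite invr_gt0.
have [n0 hn0] := Hc eps heps.
have hD := hn0 n0 (leqnn n0).
have [a [b [cc hS]]] := HS n0.
have hsmall : N%:R * (c * (k%:R * (2 * eps))) < 1.
  have -> : N%:R * (c * (k%:R * (2 * eps))) = K / (K + 1) by rewrite /K /eps; ring.
  by rewrite ltr_pdivrMr // mul1r ltrDl.
have hlow := rank_lower heps hD hsmall.
have hup := rank_upper hS.
have hN : (N <= r * k.-1)%N := leq_trans hlow hup.
have hW := cardW k.
move: hN; rewrite /N card_prod card_ord => hN.
rewrite leq_uphalf_double.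
have h1 : (k * k.-1 * k <= r.*2 * k.-1)%N.
  have -> : (k * k.-1 = 2 * #|{: wedge2_idx k}|)%N by lia.
  rewrite -mulnA -mul2n -mulnA leq_mul2l /=.
  by [].
rewrite mulnAC leq_pmul2r in h1; last by lia.
by rewrite expnS expn1.
Qed.
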